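(* Let $R=k[x_1,\dots,x_n]$ be graded by a monoid $P$ as described in the context, let $G$ act on $R$ by permuting the variables, let $\preceq$ be a monomial order, and let $I\subset R$ be a $P$-homogeneous ideal such that $\mathrm{in}_{\preceq}(I)$ is generated in (standard) degrees $\le d$. If $G$ acts monomially on $I$ up to degree $d$ and the action is $P$-compatible, then the Hilbert series of $I$ is $G$-invariant: $g(HS(I,t))=HS(I,t)$ for all $g\in G$.
   Context: $R$ is graded by a monoid $P$ such that every monomial is $P$-homogeneous and the $P$-grading refines the standard grading (each $P$-graded piece is finite dimensional). $HS(I,t)=\sum_{D\in P}\dim_k(I_D)\,t^D$. The action of $G$ is $P$-compatible if for every $g\in G$ the map $\hat g:P\to P$, $\hat g(D)=\deg(g(m))$ for any monomial $m$ with $\deg(m)=D$, is a well-defined endomorphism of $P$; then $G$ acts on power series by $g(\sum_D a_Dt^D)=\sum_D a_Dt^{\hat g(D)}$. For $h\in R$, $\mathrm{mon}(h)$ is the set of monomials of $h$ with nonzero coefficient; $G$ acts monomially on $I$ up to degree $d$ if for every $h\in I$ of standard degree $\le d$ and every $g\in G$ there is $h'\in I$ with $\mathrm{mon}(h')=\mathrm{mon}(g(h))$. *)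

(* Defs.v *)
From HB Require Import structures.
From mathcomp Require Import all_boot all_order all_algebra all_fingroup.
From mathcomp Require Export mpoly.
Set Implicit Arguments. Unset Strict Implicit. Unset Printing Implicit Defensive.
Import GRing.Theory.
Local Open Scope ring_scope.

Section Defs.
Variables (n : nat) (k : fieldType).
Local Notation R := {mpoly k[n]}.

Definition ideal_gen (S : R -> Prop) (p : R) : Prop :=
  exists rs : seq (R * R),
    (forall rs1, rs1 \in rs -> S rs1.2) /\
    p = \sum_(rs1 <- rs) rs1.1 * rs1.2.

Definition monomial_order (le : rel 'X_{1..n}) : Prop :=
  [/\ reflexive le, antisymmetric le, transitive le, total le &
      ((forall m, le 0%MM m) /\
       (forall m1 m2 m, le m1 m2 -> le (m1 + m)%MM (m2 + m)%MM))].

Definition is_lead_mon (le : rel 'X_{1..n}) (p : R) (m : 'X_{1..n}) : Prop :=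
  m \in msupp p /\ (forall m', m' \in msupp p -> le m' m).

Definition initial_ideal (le : rel 'X_{1..n}) (I : R -> Prop) : R -> Prop :=
  ideal_gen (fun q => exists f m, [/\ I f, f != 0, is_lead_mon le f m & q = 'X_[m]]).

Definition gen_in_degrees_le (J : R -> Prop) (d : nat) : Prop :=
  exists S : R -> Prop,
    (forall s, S s -> exists e, (e <= d)%N /\ s \is e.-homog) /\
    (forall p, J p <-> ideal_gen S p).

Definition Phomog (P : Type) (deg : 'X_{1..n} -> P) (D : P) (p : R) : Prop :=
  forall m, m \in msupp p -> deg m = D.

Definition Phomog_ideal (P : Type) (deg : 'X_{1..n} -> P) (I : R -> Prop) : Prop :=
  exists S : R -> Prop,
    (forall s, S s -> exists D, Phomog deg D s) /\
    (forall p, I p <-> ideal_gen S p).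

(* Permutation action on monomials, matching msym:
   msym g 'X_[m] = 'X_[mon_act g m]  (i.e. g sends x_i to x_(g i)). *)
Definition mon_act (g : 'S_n) (m : 'X_{1..n}) : 'X_{1..n} :=
  [multinom m ((g^-1)%g i) | i < n].

Definition std_deg_le (h : R) (d : nat) : Prop :=
  forall m, m \in msupp h -> (mdeg m <= d)%N.

Definition acts_monomially (G : {set 'S_n}) (I : R -> Prop) (d : nat) : Prop :=
  forall h, I h -> std_deg_le h d ->
  forall g, g \in G -> exists h', I h' /\ msupp h' =i msupp (msym g h).

Definition lin_indep (B : seq R) : Prop :=
  forall c : seq k, size c = size B ->
    \sum_(i < size B) c`_i *: B`_i = 0 -> forall i, c`_i = 0.

Definition spans (B : seq R) (S : R -> Prop) : Prop :=
  forall p, S p -> exists c : seq k, p = \sum_(i < size B) c`_i *: B`_i.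

Definition has_dim (S : R -> Prop) (r : nat) : Prop :=
  exists B : seq R, [/\ size B = r, (forall b, b \in B -> S b), lin_indep B & spans B S].

Definition Ipiece (P : Type) (deg : 'X_{1..n} -> P) (I : R -> Prop) (D : P) : R -> Prop :=
  fun p => I p /\ Phomog deg D p.

End Defs.

Definition monoid_endo (P : Type) (op : P -> P -> P) (e : P) (f : P -> P) : Prop :=
  f e = e /\ forall a b, f (op a b) = op (f a) (f b).

(* The action of ghat on a power series a = sum_D a_D t^D (coefficients
   in nat, exponents in P):  g(a) = sum_D a_D t^(ghat D).  The predicate
   "ps_act ghat a b" says that g(a) is well defined (every fibre of ghat
   meets the support of a in a finite set) and equals b, i.e.
   b_E = sum_{D : ghat D = E} a_D. *)
Definition ps_act (P : eqType) (ghat : P -> P) (a b : P -> nat) : Prop :=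
  forall E, exists L : seq P,
    [/\ uniq L,
        (forall D, D \in L <-> (ghat D = E /\ a D <> 0%N)) &
        b E = (\sum_(D <- L) a D)%N].

(* Main.v *)
Require Import Defs.
From HB Require Import structures.
From mathcomp Require Import all_boot all_order all_algebra all_fingroup.
From mathcomp Require Import mpoly.
From Stdlib Require Import Classical ClassicalEpsilon.
Set Implicit Arguments. Unset Strict Implicit.
Import GRing.Theory.
Local Open Scope ring_scope.

Lemma ker_exists {k : fieldType} {r s : nat} (A : 'M[k]_(r, s)) :
  (s < r)%N -> exists c : 'rV[k]_r, c != 0 /\ c *m A = 0.
Proof.
move=> lt.
have hr : (0 < \rank (kermx A))%N.
  by rewrite mxrank_ker subn_gt0; apply: leq_ltn_trans (rank_leq_col A) lt.
have nz : kermx A != 0 by rewrite -mxrank_eq0 -lt0n.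
have : [exists i, row i (kermx A) != 0].
  apply: contraR nz => /existsPn H. apply/eqP/row_matrixP => i.
  by rewrite row0; apply/eqP; rewrite -[_ == _]negbK H.
case/existsP=> i Hi; exists (row i (kermx A)); split=> //.
by apply/sub_kermxP; apply: row_sub.
Qed.

Section Dim.
Variables (n : nat) (k : fieldType).
Local Notation R := {mpoly k[n]}.

Lemma dim_le_detect (B : seq R) (L : seq 'X_{1..n}) :
  lin_indep B ->
  (forall c : seq k, \sum_(i < size B) c`_i *: B`_i != 0 ->
     exists2 l, l \in L & (\sum_(i < size B) c`_i *: B`_i)@_l != 0) ->
  (size B <= size L)%N.
Proof.
move=> HB Hd; rewrite leqNgt; apply/negP => lt.
pose A := \matrix_(i < size B, j < size L) (B`_i)@_(nth 0%MM L j).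
have [c [cnz cA]] := ker_exists A lt.
pose cs := [seq c 0 j | j <- enum 'I_(size B)].
have csE : forall i : 'I_(size B), cs`_i = c 0 i.
  by move=> i; rewrite (nth_map i) ?size_enum_ord // nth_ord_enum.
have v0 : \sum_(i < size B) cs`_i *: B`_i = 0.
  case: (eqVneq (\sum_(i < size B) cs`_i *: B`_i) 0) => // vnz.
  have [l lL nz] := Hd cs vnz; exfalso; move/negP: nz; apply; apply/eqP.
  have jl : (index l L < size L)%N by rewrite index_mem.
  pose j := Ordinal jl.
  have lE : l = nth 0%MM L j by rewrite /= nth_index.
  have H := congr1 (fun M : 'rV_(size L) => M 0 j) cA.
  rewrite /= !mxE in H.
  rewrite lE raddf_sum /=; transitivity (\sum_i c 0 i * A i j); last exact H.
  apply: eq_bigr => i _.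
  by rewrite mcoeffZ csE mxE.
move/negP: cnz; apply; apply/eqP/rowP => i.
rewrite mxE -csE; apply: (HB cs _ v0); by rewrite size_map size_enum_ord.
Qed.

Lemma dim_le_indep (F B : seq R) :
  lin_indep F ->
  (forall j, (j < size F)%N -> exists c : seq k, F`_j = \sum_(i < size B) c`_i *: B`_i) ->
  (size F <= size B)%N.
Proof.
move=> HF HS; rewrite leqNgt; apply/negP => lt.
have : forall j : 'I_(size F), exists c : seq k, F`_j = \sum_(i < size B) c`_i *: B`_i.
  by move=> j; apply: HS.
case/fin_all_exists => cf cfE.
pose A := \matrix_(j < size F, i < size B) (cf j)`_i.
have [c [cnz cA]] := ker_exists A lt.
pose cs := [seq c 0 j | j <- enum 'I_(size F)].
have csE : forall i : 'I_(size F), cs`_i = c 0 i.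
  by move=> i; rewrite (nth_map i) ?size_enum_ord // nth_ord_enum.
have v0 : \sum_(j < size F) cs`_j *: F`_j = 0.
  transitivity (\sum_(j < size F) \sum_(i < size B) (c 0 j * (cf j)`_i) *: B`_i).
    apply: eq_bigr => j _; rewrite cfE csE scaler_sumr; apply: eq_bigr => i _.
    by rewrite scalerA.
  rewrite exchange_big /=; apply: big1 => i _.
  rewrite -scaler_suml.
  have H := congr1 (fun M : 'rV_(size B) => M 0 i) cA.
  rewrite /= !mxE in H.
  transitivity ((\sum_j c 0 j * A j i) *: B`_i); last by rewrite H scale0r.
  by congr (_ *: _); apply: eq_bigr => j _; rewrite mxE.
move/negP: cnz; apply; apply/eqP/rowP => i.
rewrite mxE -csE; apply: (HF cs _ v0); by rewrite size_map size_enum_ord.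
Qed.
End Dim.

Lemma seq_max (T : eqType) (le : rel T) (tot : total le) (tr : transitive le)
  (s : seq T) : s != [::] -> exists2 x, x \in s & forall y, y \in s -> le y x.
Proof.
elim: s => // a s IH _; case: (eqVneq s [::]) => [->|nz].
  by exists a; rewrite ?mem_seq1 // => y; rewrite mem_seq1 => /eqP ->; case/orP: (tot a a).
have [x xs Hx] := IH nz.
case/orP: (tot a x) => H.
  exists x; first by rewrite inE xs orbT.
  by move=> y; rewrite inE => /orP [/eqP ->|/Hx].
exists a; first by rewrite inE eqxx.
move=> y; rewrite inE => /orP [/eqP ->|/Hx Hy]; first by case/orP: (tot a a).
exact: tr Hy H.
Qed.

Section Leads.
Variables (n : nat) (k : fieldType).
Local Notation R := {mpoly k[n]}.
Variable le : rel 'X_{1..n}.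
Hypotheses (le_refl : reflexive le) (le_anti : antisymmetric le)
  (le_tr : transitive le) (le_tot : total le).

Lemma lead_exists (p : R) : p != 0 -> exists u, is_lead_mon le p u.
Proof.
move=> nz; have : msupp p != [::] by rewrite msupp_eq0.
by case/(@seq_max _ le le_tot le_tr) => x xs Hx; exists x; split.
Qed.

Lemma lead_uniq (p : R) u v : is_lead_mon le p u -> is_lead_mon le p v -> u = v.
Proof.
by case=> us Hu [vs Hv]; apply: le_anti; rewrite Hu ?Hv.
Qed.

Lemma indep_leads (F : seq R) (U : seq 'X_{1..n}) :
  size U = size F -> uniq U ->
  (forall j, (j < size F)%N -> is_lead_mon le F`_j (nth 0%MM U j)) ->
  lin_indep F.
Proof.
move=> sU uU HL c sc hsum i.
apply/eqP; apply: contraT => ci.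
have iF : (i < size F)%N.
  by rewrite ltnNge; apply: contra ci => H; rewrite nth_default // sc.
pose idx := [seq j <- iota 0 (size F) | c`_j != 0].
have : idx != [::].
  apply/eqP => H; have : i \in idx by rewrite mem_filter ci mem_iota.
  by rewrite H.
have tot' : total (fun a b => le (nth 0%MM U a) (nth 0%MM U b)) by move=> a b; exact: le_tot.
have tr' : transitive (fun a b => le (nth 0%MM U a) (nth 0%MM U b)) by move=> a b d; exact: le_tr.
case/(@seq_max _ _ tot' tr') => j; rewrite mem_filter mem_iota /= add0n => /andP [cj jF] Hj.
pose u := nth 0%MM U j.
have := congr1 (mcoeff u) hsum; rewrite mcoeff0 raddf_sum /=.
rewrite (bigD1 (Ordinal jF)) //= big1 ?addr0.
  rewrite mcoeffZ => /eqP; rewrite mulf_eq0 (negbTE cj) /=.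
  by have [+ _] := HL j jF; rewrite mcoeff_msupp => /negbTE ->.
move=> i' ne; rewrite mcoeffZ.
case: (eqVneq c`_i' 0) => [->|ci']; first by rewrite mul0r.
have Hi' : le (nth 0%MM U i') u by apply: Hj; rewrite mem_filter ci' mem_iota /= add0n ltn_ord.
apply/eqP; rewrite mulf_eq0; apply/orP; right; apply: contraT => nz.
have [_ Hl] := HL i' (ltn_ord i').
rewrite -mcoeff_msupp in nz; have H2 := Hl _ nz.
have E : nth 0%MM U i' = u by apply: le_anti; rewrite Hi' H2.
suff H : i' = Ordinal jF by rewrite H eqxx in ne.
apply: val_inj => /=.
by move/eqP: E; rewrite nth_uniq ?sU ?ltn_ord // => /eqP.
Qed.
End Leads.

Section Ideal.
Variables (n : nat) (k : fieldType).
Local Notation R := {mpoly k[n]}.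
Variable S : R -> Prop.

Lemma ig0 : ideal_gen S 0.
Proof. by exists [::]; split=> //; rewrite big_nil. Qed.

Lemma igD p q : ideal_gen S p -> ideal_gen S q -> ideal_gen S (p + q).
Proof.
case=> [r1 [H1 ->]] [r2 [H2 ->]]; exists (r1 ++ r2); split; last by rewrite big_cat.
by move=> x; rewrite mem_cat => /orP [/H1|/H2].
Qed.

Lemma igM r p : ideal_gen S p -> ideal_gen S (r * p).
Proof.
case=> [rs [H ->]]; exists [seq (r * x.1, x.2) | x <- rs]; split.
  by move=> x /mapP [y yr ->] /=; apply: H.
by rewrite big_map mulr_sumr; apply: eq_bigr => x _ /=; rewrite mulrA.
Qed.

Lemma igS s : S s -> ideal_gen S s.
Proof.
move=> Ss; exists [:: (1, s)]; split; last by rewrite big_seq1 mul1r.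
by move=> x; rewrite mem_seq1 => /eqP ->.
Qed.

Lemma igZ c p : ideal_gen S p -> ideal_gen S (c *: p).
Proof. by move=> H; rewrite -mul_mpolyC; apply: igM. Qed.

Lemma ig_sum (T : eqType) (r : seq T) (F : T -> R) :
  (forall x, x \in r -> ideal_gen S (F x)) -> ideal_gen S (\sum_(x <- r) F x).
Proof.
elim: r => [|a r IH] H; first by rewrite big_nil; apply: ig0.
rewrite big_cons; apply: igD; first by apply: H; rewrite inE eqxx.
by apply: IH => x xr; apply: H; rewrite inE xr orbT.
Qed.

Lemma ig_supp p m : ideal_gen S p -> m \in msupp p ->
  exists s, S s /\ exists a b, b \in msupp s /\ m = (a + b)%MM.
Proof.
case=> [rs [H ->]] /msupp_sum_le /flattenP [l /mapP [x]].
rewrite mem_filter /= => xr -> /msuppM_le /allpairsP [[a b] /= [ha hb ->]].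
by exists x.2; split; [apply: H | exists a, b].
Qed.
End Ideal.

Section Comp.
Variables (n : nat) (k : fieldType).
Local Notation R := {mpoly k[n]}.
Variables (P : eqType) (op : P -> P -> P) (deg : 'X_{1..n} -> P).
Hypothesis degD : forall m1 m2, deg (m1 + m2)%MM = op (deg m1) (deg m2).

Definition comp (E : P) (p : R) : R :=
  \sum_(m <- msupp p | deg m == E) p@_m *: 'X_[m].

Lemma comp_coef E p m : (comp E p)@_m = if deg m == E then p@_m else 0.
Proof.
rewrite /comp raddf_sum /= big_mkcond /=.
under eq_bigr do rewrite mcoeffZ mcoeffX.
case: (boolP (m \in msupp p)) => mp.
  rewrite (bigD1_seq m) ?msupp_uniq //= eqxx mulr1 big1 ?addr0 //.
  by move=> m' ne; rewrite (negbTE ne) mulr0 if_same.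
rewrite big_seq big1.
  by rewrite (memN_msupp_eq0 mp) if_same.
move=> m' m'p; case: (eqVneq m' m) => [E'|ne]; first by move: mp; rewrite -E' m'p.
by rewrite mulr0 if_same.
Qed.

Lemma compD E p q : comp E (p + q) = comp E p + comp E q.
Proof.
apply/mpolyP => m; rewrite mcoeffD !comp_coef mcoeffD.
by case: (deg m == E); rewrite ?addr0.
Qed.

Lemma comp0 E : comp E 0 = 0.
Proof. by apply/mpolyP => m; rewrite comp_coef !mcoeff0 if_same. Qed.

Lemma compZ E c p : comp E (c *: p) = c *: comp E p.
Proof.
apply/mpolyP => m; rewrite mcoeffZ !comp_coef mcoeffZ.
by case: (deg m == E); rewrite ?mulr0.
Qed.

Lemma comp_sum E (T : Type) (r : seq T) (F : T -> R) :
  comp E (\sum_(x <- r) F x) = \sum_(x <- r) comp E (F x).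
Proof.
elim: r => [|a r IH]; first by rewrite !big_nil comp0.
by rewrite !big_cons compD IH.
Qed.

Lemma comp_XM E (s : R) Ds a : Phomog deg Ds s ->
  comp E (s * 'X_[a]) = if op (deg a) Ds == E then s * 'X_[a] else 0.
Proof.
move=> Hs; apply/mpolyP => m; rewrite comp_coef.
case: (boolP (m \in msupp (s * 'X_[a]))) => mp.
  move: (mp); rewrite (perm_mem (msuppMX _ _)) => /mapP [m' m's ->].
  by rewrite degD (Hs _ m's); case: (op (deg a) Ds == E); rewrite ?mcoeff0.
by rewrite (memN_msupp_eq0 mp) if_same; case: (_ == E); rewrite ?mcoeff0 ?(memN_msupp_eq0 mp).
Qed.

Lemma comp_ideal (S : R -> Prop) E f :
  (forall s, S s -> exists D, Phomog deg D s) ->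
  ideal_gen S f -> ideal_gen S (comp E f).
Proof.
move=> HS [rs [H ->]]; rewrite comp_sum; apply: ig_sum => x xr.
have [Ds HD] := HS _ (H _ xr).
rewrite {1}(mpolyE x.1) mulr_suml comp_sum; apply: ig_sum => m _.
rewrite -scalerAl mulrC compZ (comp_XM _ _ HD); apply: igZ.
case: (_ == E); last exact: ig0.
by rewrite mulrC; apply: igM; apply: igS; apply: H.
Qed.
End Comp.

Section MonAct.
Variables (n : nat) (k : fieldType).
Local Notation R := {mpoly k[n]}.

Lemma mon_actK (g : 'S_n) m : mon_act (g^-1)%g (mon_act g m) = m.
Proof. by apply/mnmP => i; rewrite !mnmE invgK permK. Qed.

Lemma mon_actVK (g : 'S_n) m : mon_act g (mon_act (g^-1)%g m) = m.
Proof. by apply/mnmP => i; rewrite !mnmE invgK permKV. Qed.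

Lemma mon_actD (g : 'S_n) a b : mon_act g (a + b)%MM = (mon_act g a + mon_act g b)%MM.
Proof. by apply/mnmP => i; rewrite !(mnmE, mnmDE). Qed.

Lemma msupp_msym (g : 'S_n) (h : R) m :
  (m \in msupp (msym g h)) = (mon_act (g^-1)%g m \in msupp h).
Proof.
rewrite !mcoeff_msupp mcoeff_sym; congr (_ != 0); congr (h@_ _).
by apply/mnmP => i; rewrite !mnmE invgK.
Qed.
End MonAct.

Section Key.
Variables (n : nat) (k : fieldType).
Local Notation R := {mpoly k[n]}.
Variables (P : eqType) (op : P -> P -> P) (deg : 'X_{1..n} -> P).
Hypothesis degD : forall m1 m2, deg (m1 + m2)%MM = op (deg m1) (deg m2).
Hypothesis deg_refines : forall m1 m2, deg m1 = deg m2 -> mdeg m1 = mdeg m2.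
Variable G : {group 'S_n}.
Variables (le : rel 'X_{1..n}) (le_mo : monomial_order le).
Variables (I : R -> Prop) (SI : R -> Prop).
Hypothesis HSI : forall s, SI s -> exists D, Phomog deg D s.
Hypothesis HI : forall p, I p <-> ideal_gen SI p.
Variable d : nat.
Hypothesis in_gen : gen_in_degrees_le (initial_ideal le I) d.
Hypothesis mono : acts_monomially G I d.
Variable ghat : 'S_n -> P -> P.
Hypothesis ghat_deg : forall g, g \in G -> forall m, ghat g (deg m) = deg (mon_act g m).

Definition leg (g : 'S_n) := fun a b => le (mon_act (g^-1)%g a) (mon_act (g^-1)%g b).

Lemma key g (gG : g \in G) u v : I v -> v != 0 -> is_lead_mon le v u ->
  exists h, [/\ I h, Phomog deg (deg (mon_act g u)) h, h != 0 &
               is_lead_mon (leg g) h (mon_act g u)].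
Proof.
move=> Iv vnz lvu.
have [_ _ _ _ [_ le_add]] := le_mo.
have Ju : initial_ideal le I 'X_[u].
  by apply: igS; exists v, u; split.
case: in_gen => S0 [HS0 HJ].
have := ig_supp ((HJ _).1 Ju) (_ : u \in msupp 'X_[u]).
case; first by rewrite msuppX mem_seq1.
move=> s [S0s [a [b [bs uE]]]].
have [e [ed hs]] := HS0 s S0s.
have mdb : mdeg b = e by move/dhomogP: hs => hs; apply: hs.
have Js : initial_ideal le I s := (HJ s).2 (igS S0s).
have [q [[f [c [If fnz lc qE]]] [a' [b' [b'q bE]]]]] := ig_supp Js bs.
move: b'q; rewrite qE msuppX mem_seq1 => /eqP b'E; subst b'.
pose fc := comp deg (deg c) f.
have Ifc : I fc by apply/HI; apply: comp_ideal => //; apply/HI.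
have cfc : c \in msupp fc.
  by rewrite mcoeff_msupp comp_coef eqxx -mcoeff_msupp; case: lc.
have suppfc : forall m, m \in msupp fc -> deg m = deg c /\ m \in msupp f.
  move=> m; rewrite !mcoeff_msupp comp_coef.
  by case: (deg m =P deg c) => [-> ->|]; rewrite ?eqxx.  
have lfc : is_lead_mon le fc c.
  split=> // m /suppfc [_ mf]; case: lc => _; apply; exact: mf.
have std : std_deg_le fc d.
  move=> m /suppfc [dm _]; rewrite (deg_refines dm).
  apply: leq_trans ed; rewrite -mdb bE mdegD; exact: leq_addl.
have [h' [Ih' Hs]] := mono Ifc std gG.
pose w := mon_act g (a + a')%MM.
have uE' : mon_act g u = (w + mon_act g c)%MM.
  by rewrite uE bE addmA mon_actD.
have supph : forall m, m \in msupp (h' * 'X_[w]) ->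
   exists2 m', m = (w + m')%MM & mon_act (g^-1)%g m' \in msupp fc.
  move=> m; rewrite (perm_mem (msuppMX _ _)) => /mapP [m' m'h ->].
  by exists m' => //; rewrite -msupp_msym -Hs.
have gc : mon_act g c \in msupp h' by rewrite Hs msupp_msym mon_actK.
have guh : mon_act g u \in msupp (h' * 'X_[w]).
  by rewrite (perm_mem (msuppMX _ _)) uE'; apply/mapP; exists (mon_act g c).
exists (h' * 'X_[w]); split.
- by apply/HI; rewrite mulrC; apply: igM; apply/HI.
- move=> m /supph [m' -> m'f]; rewrite uE' !degD.
  have [dm' _] := suppfc _ m'f.
  by rewrite -{1}(mon_actVK g m') -(ghat_deg gG) dm' (ghat_deg gG).
- by apply/eqP => H; move: guh; rewrite H msupp0.
- split=> // m /supph [m' -> m'f]; rewrite /leg uE' !mon_actD.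
  rewrite ![((mon_act _ w) + _)%MM]addmC; apply: le_add.
  rewrite mon_actK; by case: lfc => _; apply.
Qed.

Variable HS : P -> nat.
Hypothesis HS_def : forall D, has_dim (Ipiece deg I D) (HS D).

Lemma Ilin (B : seq R) D (c : seq k) : (forall b, b \in B -> Ipiece deg I D b) ->
  Ipiece deg I D (\sum_(i < size B) c`_i *: B`_i).
Proof.
move=> HB; split.
  apply/HI; apply: ig_sum => i _; apply: igZ; apply/HI.
  by have [] := HB _ (mem_nth 0 (ltn_ord i)).
move=> m /msupp_sum_le /flattenP [l /mapP [i _ ->]] /msuppZ_le mi.
by have [_ ] := HB _ (mem_nth 0 (ltn_ord i)); apply.
Qed.

Lemma seq_choice (T U : Type) (x0 : T) (y0 : U) (r : seq T) (Q : T -> U -> Prop) :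
  (forall i, (i < size r)%N -> exists y, Q (nth x0 r i) y) ->
  exists s : seq U, size s = size r /\
    forall i, (i < size r)%N -> Q (nth x0 r i) (nth y0 s i).
Proof.
elim: r => [|a r IH] H; first by exists [::].
have [y Hy] := H 0%N isT.
have [s [ss Hs]] := IH (fun i hi => H i.+1 hi).
by exists (y :: s); split; [rewrite /= ss | case].
Qed.

Lemma leg_props g : [/\ reflexive (leg g), antisymmetric (leg g),
  transitive (leg g) & total (leg g)].
Proof.
have [lr la lt lto _] := le_mo.
split.
- by move=> a; apply: lr.
- move=> a b H; rewrite -(mon_actVK g a) -(mon_actVK g b); congr (mon_act g _).
  exact: la.
- by move=> a b c; apply: lt.
- by move=> a b; apply: lto.
Qed.

Lemma main_ineq g (gG : g \in G) m0 : (HS (deg m0) <= HS (deg (mon_act g m0)))%N.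
Proof.
have [B [sB HB1 HB2 HB3]] := HS_def (deg m0).
have [B' [sB' HB1' HB2' HB3']] := HS_def (deg (mon_act g m0)).
have [lr la lt lto _] := le_mo.
pose leadP u := exists v, [/\ I v, Phomog deg (deg m0) v, v != 0 & is_lead_mon le v u].
pose dec u := if excluded_middle_informative (leadP u) then true else false.
have decP : forall u, dec u -> leadP u.
  by move=> u; rewrite /dec; case: excluded_middle_informative.
pose M := [seq bmnm x | x : 'X_{1..n < (mdeg m0).+1}].
pose L := filter dec M.
have uL : uniq L.
  apply: filter_uniq; rewrite map_inj_uniq ?enum_uniq //; exact: val_inj.
apply: (@leq_trans (size L)).
  rewrite -sB; apply: dim_le_detect HB2 _ => c vnz.
  have Iv := Ilin c HB1.
  have [u lu] := lead_exists lt lto vnz.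
  exists u; last by rewrite -mcoeff_msupp; case: lu.
  rewrite mem_filter; apply/andP; split.
    rewrite /dec; case: excluded_middle_informative => // []; case.
    by exists (\sum_(i < size B) c`_i *: B`_i); case: Iv.
  have [us _] := lu; have [_ Hp] := Iv.
  have mu : (mdeg u < (mdeg m0).+1)%N by rewrite ltnS (deg_refines (Hp _ us)).
  by apply/mapP; exists (BMultinom mu); rewrite ?mem_enum.
have := @seq_choice _ _ 0%MM 0 L
  (fun u h => [/\ I h, Phomog deg (deg (mon_act g m0)) h, h != 0 &
               is_lead_mon (leg g) h (mon_act g u)]).
case.
  move=> i iL; have : dec (nth 0%MM L i) by have := mem_nth 0%MM iL; rewrite mem_filter => /andP [].
  move/decP => [v [Iv Hv vnz lv]].
  have [h [Ih Hh hnz lh]] := key gG Iv vnz lv.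
  exists h; split=> //.
  have [us _] := lv.
  by rewrite -(ghat_deg gG) -(Hv _ us) (ghat_deg gG).
move=> F [sF HF].
rewrite -sF -sB'; apply: dim_le_indep.
  have [lr' la' lt' lto'] := leg_props g.
  apply: (@indep_leads _ _ (leg g) la' lt' lto' F (map (mon_act g) L)).
  - by rewrite size_map sF.
  - by rewrite map_inj_uniq // => a b H; rewrite -(mon_actK g a) H mon_actK.
  - move=> j jF; rewrite sF in jF; rewrite (nth_map 0%MM) //.
    by have [] := HF j jF.
move=> j jF; apply: HB3'; rewrite sF in jF; have [? ? _ _] := HF j jF; by split.
Qed.
End Key.


Unset Implicit Arguments.
Unset Strict Implicit.

Theorem mainTheorem13
  (n : nat) (k : fieldType)
  (P : eqType) (op : P -> P -> P) (e : P)
  (op_assoc : forall a b c, op a (op b c) = op (op a b) c)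
  (op_e_l : forall a, op e a = a) (op_e_r : forall a, op a e = a)
  (deg : 'X_{1..n} -> P)
  (deg0 : deg 0%MM = e)
  (degD : forall m1 m2, deg (m1 + m2)%MM = op (deg m1) (deg m2))
  (deg_refines : forall m1 m2, deg m1 = deg m2 -> mdeg m1 = mdeg m2)
  (G : {group 'S_n})
  (le : rel 'X_{1..n}) (le_mo : monomial_order le)
  (I : {mpoly k[n]} -> Prop) (I_hom : Phomog_ideal deg I)
  (d : nat) (in_gen : gen_in_degrees_le (initial_ideal le I) d)
  (mono : acts_monomially G I d)
  (ghat : 'S_n -> P -> P)
  (ghat_endo : forall g, g \in G -> monoid_endo op e (ghat g))
  (ghat_deg : forall g, g \in G -> forall m, ghat g (deg m) = deg (mon_act g m))
  (HS : P -> nat) (HS_def : forall D, has_dim (Ipiece deg I D) (HS D)) :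
  forall g, g \in G -> ps_act (ghat g) HS HS.
Proof.
case: I_hom => SI [HSI HI].
have ineq : forall g, g \in G -> forall m0,
    (HS (deg m0) <= HS (deg (mon_act g m0)))%N.
  by move=> g gG m0; apply: (main_ineq degD deg_refines le_mo HSI HI in_gen mono ghat_deg HS_def gG).
have eqHS : forall g, g \in G -> forall m, HS (deg (mon_act g m)) = HS (deg m).
  move=> g gG m; apply/eqP; rewrite eqn_leq ineq // andbT.
  by have := ineq _ (groupVr gG) (mon_act g m); rewrite mon_actK.
have nz_img : forall D, HS D <> 0%N -> exists m, deg m = D.
  move=> D HD; have [B [sB HB1 HB2 HB3]] := HS_def D.
  case: B sB HB1 HB2 HB3 => [|b B'] sB HB1 HB2 HB3; first by rewrite -sB in HD.
  have [Ib Hb] := HB1 b (mem_head _ _).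
  have bnz : b != 0.
    apply/eqP => b0.
    have := HB2 (1 :: nseq (size B') 0) _ _ 0%N; rewrite /= => H.
    have : (1 : k) = 0 by apply: H; rewrite ?size_nseq //= big_ord_recl /= b0 scaler0 add0r big1 // => i _; rewrite nth_nseq if_same scale0r.
    by move/eqP; rewrite oner_eq0.
  have : msupp b != [::] by rewrite msupp_eq0.
  case Es: (msupp b) => [|m s] // _; exists m; apply: Hb; by rewrite Es mem_head.
move=> g gG E.
have gV : (g^-1)%g \in G by rewrite groupV.
case: (classic (exists D, ghat g D = E /\ HS D <> 0%N)).
- case=> D [DE HD]; have [m Dm] := nz_img D HD.
  exists [:: D]; split => //.
    move=> D'; rewrite mem_seq1; split; first by move/eqP ->.
    case=> E' HD'; have [m' Dm'] := nz_img D' HD'.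
    apply/eqP; rewrite -Dm -Dm'.
    rewrite -(mon_actK g m) -(mon_actK g m') -!(ghat_deg _ gV) -!(ghat_deg _ gG).
    by rewrite Dm Dm' DE E'.
  by rewrite big_seq1 -DE -Dm (ghat_deg _ gG) eqHS.
- move=> H; exists [::]; split => //.
    by move=> D; split => // -[DE HD]; case: H; exists D.
  rewrite big_nil; apply/eqP; apply: contraT => /eqP HE.
  have [m' Em'] := nz_img E HE.
  case: H; exists (deg (mon_act (g^-1)%g m')); split.
    by rewrite (ghat_deg _ gG) mon_actVK.
  by rewrite (eqHS _ gV) Em'.
Qed.
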